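(* Let $L$ be a multisorted algebra in the positive existential signature. Then $L$ satisfies axioms (0)–(4) and (7)–(10) if and only if $L$ is isomorphic to a subalgebra of the positive existential algebra $A(W)$ of some set $W$.
   Context: Throughout, the Boolean prime ideal theorem is assumed. Signature. There is a sort $n$ for each natural number $n\ge0$. For every function $\alpha\colon\{1,\dots,n\}\to\{1,\dots,k\}$ there is a unary function symbol (''substitution'') $\alpha\colon n\to k$ (argument of sort $n$, value of sort $k$). Each sort has constants $0,1$ and binary $\vee,\wedge$. For each $n$ there is a function symbol $\exists\colon n+1\to n$ (projection). This is the positive existential signature. For substitutions $\alpha\colon k\to n$, $\beta\colon n\to m$, $\beta\circ\alpha\colon k\to m$ is the substitution symbol of the composite function; $\beta(\alpha(r))$ is composition in an algebra; $\mathrm{id}$ is the identity substitution. The associated cylindrification of $\exists\colon n+1\to n$ is the substitution $c\colon n\to n+1$, $c(i)=i$. $\exists^{(n)}$ denotes $n$-fold application of projection. Concrete algebras. For a set $W$: $\alpha^{\mathrm{tuple}}(x_1,\dots,x_k)=(x_{\alpha(1)},\dots,x_{\alpha(n)})$ and $\alpha^{\mathrm{relation}}(r)=\{\bar x\in W^k:\alpha^{\mathrm{tuple}}(\bar x)\in r\}$ for $r\subseteq W^n$. The positive existential algebra $A(W)$ interprets sort $n$ as $\mathcal P(W^n)$, $\alpha$ as $\alpha^{\mathrm{relation}}$, $0,1,\vee,\wedge$ as $\emptyset,W^n,\cup,\cap$, and $\exists(r)=\{(x_1,\dots,x_n):\exists y\,(x_1,\dots,x_n,y)\in r\}$. Partitioning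 cylindrifications: for $k_1,\dots,k_m$ and $n=\sum k_j$, the substitutions $c_i\colon k_i\to n$, $c_i(l)=l+\sum_{j<i}k_j$. $x\le y$ (also $y\ge x$) means $x=x\wedge y$. Axioms: (0) For partitioning cylindrifications $c_1,\dots,c_m$ and $r_i,s_i$ of sort $k_i$: if $\bigvee_i c_i(s_i)\ge\bigwedge_i c_i(r_i)$ then $s_i\ge r_i$ for some $i$ (including $m=0$: $0\ge1$ fails in sort $0$). (1) Each sort is a bounded distributive lattice. (2) Substitutions preserve $0,1,\vee,\wedge$. (3) $(\beta\circ\alpha)(r)=\beta(\alpha(r))$. (4) $\mathrm{id}(r)=r$. (7) $\exists(0)=0$ and $\exists(r\vee s)=\exists(r)\vee\exists(s)$. (8) $r\le c(\exists(r))$ for $r$ of sort $n+1$, with $c$ the associated cylindrification. (9) $\exists(r\wedge c(s))=\exists(r)\wedge s$ for $r$ of sort $n+1$, $s$ of sort $n$. (10) For substitutions $\alpha_i\colon k_i\to m$ ($i=1,\dots,n$), let $\beta_i\colon k_i+1\to m+n$ be given by $\beta_i(j)=\alpha_i(j)$ for $j\le k_i$ and $\beta_i(k_i+1)=m+i$ (so $\beta_i^{\mathrm{tuple}}(\bar x y_1\cdots y_n)=\alpha_i^{\mathrm{tuple}}(\bar x)y_i$). Then for all $r_i$ of sort $k_i+1$: $\exists^{(n)}\big(\bigwedge_{i=1}^n\beta_i(r_i)\big)=\bigwedge_{i=1}^n\alpha_i(\exists(r_i))$. *)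

(* Defs.v *)
From mathcomp Require Import all_boot.
Set Implicit Arguments. Unset Strict Implicit. Unset Printing Implicit Defensive.

(* Sorts are natural numbers n; the variables of sort n are indexed by 'I_n
   (0-based, i.e. i : 'I_n stands for the paper's i+1 in {1,...,n}).
   A substitution symbol alpha : n -> k is a function {1..n} -> {1..k},
   represented as a finite function {ffun 'I_n -> 'I_k} (so that extensionally
   equal functions give the same symbol). *)

Record peAlg := PeAlg {
  psort  : nat -> Type;
  psubst : forall n k : nat, {ffun 'I_n -> 'I_k} -> psort n -> psort k;
  pzero  : forall n, psort n;
  pone   : forall n, psort n;
  pjoin  : forall n, psort n -> psort n -> psort n;
  pmeet  : forall n, psort n -> psort n -> psort n;
  pex    : forall n, psort n.+1 -> psort n
}.

Definition snoc (W : Type) (n : nat) (x : 'I_n -> W) (y : W) : 'I_n.+1 -> W :=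
  fun i => match unlift ord_max i with Some j => x j | None => y end.

Definition A (W : Type) : peAlg :=
  @PeAlg (fun n => ('I_n -> W) -> Prop)
    (fun n k (a : {ffun 'I_n -> 'I_k}) r (x : 'I_k -> W) => r (fun i => x (a i)))
    (fun n _ => False)
    (fun n _ => True)
    (fun n r s x => r x \/ s x)
    (fun n r s x => r x /\ s x)
    (fun n r (x : 'I_n -> W) => exists y : W, r (snoc x y)).

(** Homomorphisms; "isomorphic to a subalgebra" = injective homomorphism. *)
Definition pe_hom (L M : peAlg) (h : forall n, psort L n -> psort M n) : Prop :=
  (forall n k (a : {ffun 'I_n -> 'I_k}) r,
          h k (psubst a r) = psubst a (h n r)) /\
  (forall n, h n (pzero L n) = pzero M n) /\
  (forall n, h n (pone L n) = pone M n) /\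
  (forall n r s, h n (pjoin r s) = pjoin (h n r) (h n s)) /\
  (forall n r s, h n (pmeet r s) = pmeet (h n r) (h n s)) /\
  (forall n r, h n (pex r) = pex (h n.+1 r)).

Definition embeds_in_A (L : peAlg) : Prop :=
  exists (W : Type) (h : forall n, psort L n -> psort (A W) n),
    pe_hom h /\ forall n, injective (h n).

Section Ax.
Variable L : peAlg.

Definition ple n (x y : psort L n) : Prop := x = pmeet x y.

Definition fcomp n k m (b : {ffun 'I_k -> 'I_m}) (a : {ffun 'I_n -> 'I_k})
  : {ffun 'I_n -> 'I_m} := [ffun i => b (a i)].

Definition cyl n : {ffun 'I_n -> 'I_n.+1} := [ffun i => widen_ord (leqnSn n) i].

Lemma pcyl_proof (ks : seq nat) (i : 'I_(size ks)) (l : 'I_(nth 0 ks i)) :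
  l + sumn (take i ks) < sumn ks.
Proof.
have Hl := ltn_ord l.
have E : sumn ks = sumn (take i ks) + (nth 0 ks i + sumn (drop i.+1 ks)).
  by rewrite -{1}(cat_take_drop i ks) sumn_cat (drop_nth 0 (ltn_ord i)).
rewrite E addnC ltn_add2l.
exact: leq_trans Hl (leq_addr _ _).
Qed.

Definition pcyl (ks : seq nat) (i : 'I_(size ks)) :
  {ffun 'I_(nth 0 ks i) -> 'I_(sumn ks)} :=
  [ffun l => Ordinal (pcyl_proof l)].

Fixpoint pexn (n m : nat) : psort L (n + m) -> psort L m :=
  match n return psort L (n + m) -> psort L m with
  | 0 => fun x => x
  | n'.+1 => fun x => @pexn n' m (@pex L (n' + m) x)
  end.

(* beta_i : k_i + 1 -> n + m from alpha_i : k_i -> m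
   (positions 0..m-1 are the x's, position m+i is y_i) *)
Definition beta_of (n m k : nat) (a : {ffun 'I_k -> 'I_m}) (i : 'I_n)
  : {ffun 'I_k.+1 -> 'I_(n + m)} :=
  [ffun j => match unlift ord_max j with
             | Some j' => cast_ord (addnC m n) (lshift n (a j'))
             | None => cast_ord (addnC m n) (rshift m i)
             end].

Definition pe_axioms : Prop :=
  (* (0) *)
   (forall (ks : seq nat) (r s : forall i : 'I_(size ks), psort L (nth 0 ks i)),
      ple (\big[@pmeet L (sumn ks)/pone L (sumn ks)]_(i < size ks) psubst (pcyl i) (r i))
          (\big[@pjoin L (sumn ks)/pzero L (sumn ks)]_(i < size ks) psubst (pcyl i) (s i)) ->
      exists i, ple (r i) (s i)) /\
   (* (1) bounded distributive lattices *)
   (forall n (x y z : psort L n),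
      pjoin x (pjoin y z) = pjoin (pjoin x y) z /\
      pmeet x (pmeet y z) = pmeet (pmeet x y) z /\
      pjoin x y = pjoin y x /\
      pmeet x y = pmeet y x /\
      pjoin x (pmeet x y) = x /\
      pmeet x (pjoin x y) = x /\
      pmeet x (pjoin y z) = pjoin (pmeet x y) (pmeet x z) /\
      pjoin x (pzero L n) = x /\
      pmeet x (pone L n) = x) /\
   (* (2) substitutions preserve 0,1,join,meet *)
   (forall n k (a : {ffun 'I_n -> 'I_k}) (x y : psort L n),
      [/\ psubst a (pzero L n) = pzero L k,
          psubst a (pone L n) = pone L k,
          psubst a (pjoin x y) = pjoin (psubst a x) (psubst a y) &
          psubst a (pmeet x y) = pmeet (psubst a x) (psubst a y)]) /\
   (* (3) *)
   (forall n k m (a : {ffun 'I_n -> 'I_k}) (b : {ffun 'I_k -> 'I_m}) (r : psort L n),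
      psubst (fcomp b a) r = psubst b (psubst a r)) /\
   (* (4) *)
   (forall n (r : psort L n), psubst [ffun i : 'I_n => i] r = r) /\
   (* (7) *)
   (forall n (r s : psort L n.+1),
      pex (pzero L n.+1) = pzero L n /\ pex (pjoin r s) = pjoin (pex r) (pex s)) /\
   (* (8) *)
   (forall n (r : psort L n.+1), ple r (psubst (cyl n) (pex r))) /\
   (* (9) *)
   (forall n (r : psort L n.+1) (s : psort L n),
      pex (pmeet r (psubst (cyl n) s)) = pmeet (pex r) s) /\
   (* (10) *)
   (forall (n m : nat) (k : 'I_n -> nat) (a : forall i, {ffun 'I_(k i) -> 'I_m})
           (r : forall i, psort L (k i).+1),
      pexn (\big[@pmeet L (n + m)/pone L (n + m)]_(i < n) psubst (beta_of (a i) i) (r i))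
      = \big[@pmeet L m/pone L m]_(i < n) psubst (a i) (pex (r i))).

End Ax.

(* Main.v *)
Require Import Defs.
From mathcomp Require Import all_boot.
From mathcomp Require Import boolp classical_sets.
From Stdlib Require Import ClassicalEpsilon ProofIrrelevance Eqdep_dec FunctionalExtensionality Classical PropExtensionality.
Set Implicit Arguments. Unset Strict Implicit. Unset Printing Implicit Defensive.

Section Lat.
Variable L : peAlg.
Hypothesis HL : pe_axioms L.

Local Notation S := (psort L).
Local Notation "x <=L y" := (ple x y) (at level 70).
Local Notation mt := (@pmeet L _).
Local Notation jn := (@pjoin L _).

Lemma ax1 n (x y z : S n) :
      pjoin x (pjoin y z) = pjoin (pjoin x y) z /\
      pmeet x (pmeet y z) = pmeet (pmeet x y) z /\
      pjoin x y = pjoin y x /\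
      pmeet x y = pmeet y x /\
      pjoin x (pmeet x y) = x /\
      pmeet x (pjoin x y) = x /\
      pmeet x (pjoin y z) = pjoin (pmeet x y) (pmeet x z) /\
      pjoin x (pzero L n) = x /\
      pmeet x (pone L n) = x.
Proof. by case: HL => _ [H _]; apply: H. Qed.

Lemma jA n (x y z : S n) : jn x (jn y z) = jn (jn x y) z. Proof. by case: (ax1 x y z). Qed.
Lemma mA n (x y z : S n) : mt x (mt y z) = mt (mt x y) z. Proof. by case: (ax1 x y z) => _ []. Qed.
Lemma jC n (x y : S n) : jn x y = jn y x. Proof. by case: (ax1 x y x) => _ [] _ []. Qed.
Lemma mC n (x y : S n) : mt x y = mt y x. Proof. by case: (ax1 x y x) => _ [] _ [] _ []. Qed.
Lemma jmK n (x y : S n) : jn x (mt x y) = x. Proof. by case: (ax1 x y x) => _ [] _ [] _ [] _ []. Qed.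
Lemma mjK n (x y : S n) : mt x (jn x y) = x. Proof. by case: (ax1 x y x) => _ [] _ [] _ [] _ [] _ []. Qed.
Lemma mjD n (x y z : S n) : mt x (jn y z) = jn (mt x y) (mt x z).
Proof. by case: (ax1 x y z) => _ [] _ [] _ [] _ [] _ [] _ []. Qed.
Lemma j0 n (x : S n) : jn x (pzero L n) = x. Proof. by case: (ax1 x x x) => _ [] _ [] _ [] _ [] _ [] _ [] _ []. Qed.
Lemma m1 n (x : S n) : mt x (pone L n) = x. Proof. by case: (ax1 x x x) => _ [] _ [] _ [] _ [] _ [] _ [] _ []. Qed.

Lemma mm n (x : S n) : mt x x = x.
Proof. by rewrite -{2}(jmK x x) mjK. Qed.
Lemma jj n (x : S n) : jn x x = x.
Proof. by rewrite -{2}(mjK x x) jmK. Qed.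

Lemma le_refl n (x : S n) : x <=L x. Proof. by rewrite /ple mm. Qed.
Lemma le_trans n (x y z : S n) : x <=L y -> y <=L z -> x <=L z.
Proof. rewrite /ple => H1 H2. by rewrite {1}H1 {1}H2 mA -H1. Qed.
Lemma le_anti n (x y : S n) : x <=L y -> y <=L x -> x = y.
Proof. by rewrite /ple => H1 H2; rewrite H1 H2 mC -H2. Qed.
Lemma leJ n (x y : S n) : x <=L y <-> jn x y = y.
Proof.
rewrite /ple; split=> H.
  by rewrite H jC mC jmK.
by rewrite -H mjK.
Qed.
Lemma meet_l n (x y : S n) : mt x y <=L x.
Proof. by rewrite /ple [in RHS]mC mA mm. Qed.
Lemma meet_r n (x y : S n) : mt x y <=L y.
Proof. by rewrite mC; apply: meet_l. Qed.
Lemma meet_glb n (x y z : S n) : x <=L y -> x <=L z -> x <=L mt y z.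
Proof. by rewrite /ple => H1 H2; rewrite mA -H1. Qed.
Lemma join_l n (x y : S n) : x <=L jn x y.
Proof. by rewrite /ple mjK. Qed.
Lemma join_r n (x y : S n) : y <=L jn x y.
Proof. by rewrite jC; apply: join_l. Qed.
Lemma join_lub n (x y z : S n) : x <=L z -> y <=L z -> jn x y <=L z.
Proof. by move=> /leJ H1 /leJ H2; apply/leJ; rewrite -jA H2 H1. Qed.
Lemma le1 n (x : S n) : x <=L pone L n. Proof. by rewrite /ple m1. Qed.
Lemma le0 n (x : S n) : pzero L n <=L x.
Proof. by apply/leJ; rewrite jC j0. Qed.
Lemma meet_mono n (x y x' y' : S n) : x <=L x' -> y <=L y' -> mt x y <=L mt x' y'.
Proof.
move=> H1 H2; apply: meet_glb.
  exact: le_trans (meet_l _ _) H1.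
exact: le_trans (meet_r _ _) H2.
Qed.
Lemma join_mono n (x y x' y' : S n) : x <=L x' -> y <=L y' -> jn x y <=L jn x' y'.
Proof.
move=> H1 H2; apply: join_lub.
  exact: le_trans H1 (join_l _ _).
exact: le_trans H2 (join_r _ _).
Qed.
Lemma dcut n (a b c d f : S n) : mt a f <=L b -> c <=L jn d f -> mt a c <=L jn b d.
Proof.
move=> H1 H2.
have E : mt a c <=L mt a (jn d f) by apply: meet_mono => //; apply: le_refl.
apply: (le_trans E); rewrite mjD.
apply: join_lub.
  exact: le_trans (meet_r _ _) (join_r _ _).
exact: le_trans H1 (join_l _ _).
Qed.


Lemma ax2 n k (a : {ffun 'I_n -> 'I_k}) (x y : S n) :
      [/\ psubst a (pzero L n) = pzero L k,
          psubst a (pone L n) = pone L k,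
          psubst a (pjoin x y) = pjoin (psubst a x) (psubst a y) &
          psubst a (pmeet x y) = pmeet (psubst a x) (psubst a y)].
Proof. by case: HL => _ [_ [H _]]; apply: H. Qed.
Lemma sub0 n k (a : {ffun 'I_n -> 'I_k}) : psubst a (pzero L n) = pzero L k.
Proof. by case: (ax2 a (pone L n) (pone L n)). Qed.
Lemma sub1 n k (a : {ffun 'I_n -> 'I_k}) : psubst a (pone L n) = pone L k.
Proof. by case: (ax2 a (pone L n) (pone L n)). Qed.
Lemma subJ n k (a : {ffun 'I_n -> 'I_k}) (x y : S n) : psubst a (pjoin x y) = pjoin (psubst a x) (psubst a y).
Proof. by case: (ax2 a x y). Qed.
Lemma subM n k (a : {ffun 'I_n -> 'I_k}) (x y : S n) : psubst a (pmeet x y) = pmeet (psubst a x) (psubst a y).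
Proof. by case: (ax2 a x y). Qed.
Lemma sub_mono n k (a : {ffun 'I_n -> 'I_k}) (x y : S n) : x <=L y -> psubst a x <=L psubst a y.
Proof. by rewrite /ple => H; rewrite -subM -H. Qed.
Lemma subC n k m (a : {ffun 'I_n -> 'I_k}) (b : {ffun 'I_k -> 'I_m}) (r : S n) :
  psubst (fcomp b a) r = psubst b (psubst a r).
Proof. by case: HL => _ [_ [_ [H _]]]; apply: H. Qed.
Lemma subC' n k m (a : 'I_n -> 'I_k) (b : 'I_k -> 'I_m) (r : S n) :
  psubst (finfun (fun i => b (a i))) r = psubst (finfun b) (psubst (finfun a) r).
Proof.
rewrite -subC; congr psubst; apply/ffunP => i; by rewrite /fcomp !ffunE.
Qed.
Lemma subI n (r : S n) : psubst [ffun i : 'I_n => i] r = r.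
Proof. by case: HL => _ [_ [_ [_ [H _]]]]; apply: H. Qed.
Lemma subI' n (a : 'I_n -> 'I_n) (r : S n) : (forall i, a i = i) -> psubst (finfun a) r = r.
Proof. move=> H; rewrite -{2}(subI r); congr psubst; apply/ffunP => i; by rewrite !ffunE H. Qed.
Lemma ex0 n : pex (pzero L n.+1) = pzero L n.
Proof. by case: HL => _ [_ [_ [_ [_ [H _]]]]]; case: (H n (pzero L _) (pzero L _)). Qed.
Lemma exJ n (r s : S n.+1) : pex (pjoin r s) = pjoin (pex r) (pex s).
Proof. by case: HL => _ [_ [_ [_ [_ [H _]]]]]; case: (H n r s). Qed.
Lemma ex_mono n (r s : S n.+1) : r <=L s -> pex r <=L pex s.
Proof. by move=> /leJ H; apply/leJ; rewrite -exJ H. Qed.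
Lemma ax8 n (r : S n.+1) : r <=L psubst (cyl n) (pex r).
Proof. by case: HL => _ [_ [_ [_ [_ [_ [H _]]]]]]; apply: H. Qed.
Lemma ax9 n (r : S n.+1) (s : S n) : pex (pmeet r (psubst (cyl n) s)) = pmeet (pex r) s.
Proof. by case: HL => _ [_ [_ [_ [_ [_ [_ [H _]]]]]]]; apply: H. Qed.
Lemma ex_cyl_le n (s : S n) : pex (psubst (cyl n) s) <=L s.
Proof.
have := ax9 (pone L n.+1) s; rewrite mC m1 => ->; exact: meet_r.
Qed.
Lemma ax10 : forall (n m : nat) (k : 'I_n -> nat) (a : forall i, {ffun 'I_(k i) -> 'I_m})
           (r : forall i, psort L (k i).+1),
      pexn (\big[@pmeet L (n + m)/pone L (n + m)]_(i < n) psubst (beta_of (a i) i) (r i))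
      = \big[@pmeet L m/pone L m]_(i < n) psubst (a i) (pex (r i)).
Proof. by case: HL => _ [_ [_ [_ [_ [_ [_ [_ H]]]]]]]. Qed.
Lemma ex_subst m k (a : {ffun 'I_k -> 'I_m}) (r : S k.+1) :
  pex (psubst (@beta_of 1 m k a ord0) r) = psubst a (pex r).
Proof.
have := @ax10 1 m (fun _ => k) (fun _ => a) (fun _ => r).
by rewrite !big_ord_recl !big_ord0 /= !m1.
Qed.
Lemma ax0 : forall (ks : seq nat) (r s : forall i : 'I_(size ks), psort L (nth 0 ks i)),
      ple (\big[@pmeet L (sumn ks)/pone L (sumn ks)]_(i < size ks) psubst (pcyl i) (r i))
          (\big[@pjoin L (sumn ks)/pzero L (sumn ks)]_(i < size ks) psubst (pcyl i) (s i)) ->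
      exists i, ple (r i) (s i).
Proof. by case: HL. Qed.


Definition meetl m (s : seq (S m)) := foldr (@pmeet L m) (pone L m) s.
Definition joinl m (s : seq (S m)) := foldr (@pjoin L m) (pzero L m) s.

Lemma meetl_cat m (s1 s2 : seq (S m)) : meetl (s1 ++ s2) = mt (meetl s1) (meetl s2).
Proof. elim: s1 => [|y s IH] /=; first by rewrite mC m1. by rewrite IH mA. Qed.
Lemma joinl_cat m (s1 s2 : seq (S m)) : joinl (s1 ++ s2) = jn (joinl s1) (joinl s2).
Proof. elim: s1 => [|y s IH] /=; first by rewrite jC j0. by rewrite IH jA. Qed.
Lemma meetl_le m (s : seq (S m)) y : List.In y s -> meetl s <=L y.
Proof.
elim: s => [|x s IH] //= [->|H]; first exact: meet_l.
exact: le_trans (meet_r _ _) (IH H).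
Qed.
Lemma joinl_ge m (s : seq (S m)) y : List.In y s -> y <=L joinl s.
Proof.
elim: s => [|x s IH] //= [->|H]; first exact: join_l.
exact: le_trans (IH H) (join_r _ _).
Qed.
Lemma meetl_sub m (s1 s2 : seq (S m)) f :
  (forall y, List.In y s1 -> List.In y s2 \/ y = f) -> mt (meetl s2) f <=L meetl s1.
Proof.
elim: s1 => [|x s IH] /= H; first exact: le1.
apply: meet_glb; last by apply: IH => y Hy; apply: H; right.
case: (H x (or_introl erefl)) => [Hx|->]; last exact: meet_r.
exact: le_trans (meet_l _ _) (meetl_le Hx).
Qed.
Lemma joinl_sub m (s1 s2 : seq (S m)) f :
  (forall y, List.In y s1 -> List.In y s2 \/ y = f) -> joinl s1 <=L jn (joinl s2) f.
Proof.
elim: s1 => [|x s IH] /= H; first exact: le0.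
apply: join_lub; last by apply: IH => y Hy; apply: H; right.
case: (H x (or_introl erefl)) => [Hx|->]; last exact: join_r.
exact: le_trans (joinl_ge Hx) (join_l _ _).
Qed.
Lemma sub_meetl n k (a : {ffun 'I_n -> 'I_k}) s : psubst a (meetl s) = meetl (map (psubst a) s).
Proof. elim: s => [|x s IH] /=; first exact: sub1. by rewrite subM IH. Qed.
Lemma sub_joinl n k (a : {ffun 'I_n -> 'I_k}) s : psubst a (joinl s) = joinl (map (psubst a) s).
Proof. elim: s => [|x s IH] /=; first exact: sub0. by rewrite subJ IH. Qed.

Lemma In_map (A B : Type) (f : A -> B) (s : seq A) y :
  List.In y (map f s) -> exists x, List.In x s /\ y = f x.
Proof.
elim: s => [|x s IH] //= [<-|H]; first by exists x; split; [left|].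
by case: (IH H) => x' [H1 H2]; exists x'; split; [right|].
Qed.
Lemma map_In (A B : Type) (f : A -> B) (s : seq A) x :
  List.In x s -> List.In (f x) (map f s).
Proof. elim: s => [|x' s IH] //= [->|H]; [by left|right; exact: IH]. Qed.
Lemma In_filter (A : Type) (f : pred A) (s : seq A) x :
  List.In x (filter f s) <-> List.In x s /\ f x.
Proof.
elim: s => [|y s IH] /=; first by split=> // [[]].
case Hy: (f y) => /=.
  split; first by case=> [<-|/IH [? ?]]; split=> //; [left|right].
  by case=> [[<-|H] Hx]; [left|right; apply/IH].
rewrite IH; split; first by case=> ? ?; split=> //; right.
by case=> [[<-|H] Hx]; [rewrite Hx in Hy|].
Qed.
Lemma In_cat (A : Type) (s1 s2 : seq A) x : List.In x (s1 ++ s2) <-> List.In x s1 \/ List.In x s2.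
Proof. elim: s1 => [|y s IH] /=; first by intuition. by rewrite IH; intuition. Qed.

End Lat.

Section Henkin.
Variable L : peAlg.
Hypothesis HL : pe_axioms L.

Local Notation S := (psort L).
Local Notation "x <=L y" := (ple x y) (at level 70).
Local Notation mt := (@pmeet L _).
Local Notation jn := (@pjoin L _).

Record base := Base { bn : nat; br : S bn; bs : S bn }.
Inductive term := tb (p : base) (j : nat) | tsk (n : nat) (r : S n.+1) (t : 'I_n -> term).
Record sent := Sent { sn : nat; sr : S sn; sx : 'I_sn -> term }.
Record plc (m : nat) := Plc { pln : nat; plr : S pln; pla : 'I_pln -> 'I_m }.
Arguments pla {m} p _.
Arguments sx s _ : clear implicits.
Arguments plr {m} p.


Definition pv m (p : plc m) : S m := psubst (finfun (pla p)) (plr p).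
Definition psent m (z : 'I_m -> term) (p : plc m) : sent := Sent (plr p) (fun i => z (pla p i)).

Definition PRef (G D : sent -> Prop) :=
  exists m (z : 'I_m -> term) (Gs Ds : seq (plc m)),
    (forall p, List.In p Gs -> G (psent z p)) /\
    (forall p, List.In p Ds -> D (psent z p)) /\
    meetl (map (@pv m) Gs) <=L joinl (map (@pv m) Ds).

Lemma PRef_mono (G D G' D' : sent -> Prop) :
  (forall x, G x -> G' x) -> (forall x, D x -> D' x) -> PRef G D -> PRef G' D'.
Proof.
move=> HG HD [m [z [Gs [Ds [H1 [H2 H3]]]]]].
by exists m, z, Gs, Ds; split; [|split]=> // p Hp; [apply: HG; apply: H1|apply: HD; apply: H2].
Qed.

Definition tr m m' (s : 'I_m -> 'I_m') (p : plc m) : plc m' := Plc (plr p) (fun i => s (pla p i)).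
Lemma pv_tr m m' (s : 'I_m -> 'I_m') (p : plc m) : pv (tr s p) = psubst (finfun s) (pv p).
Proof. by rewrite /pv /= subC'. Qed.
Lemma psent_tr m m' (s : 'I_m -> 'I_m') z z' (p : plc m) :
  (forall j, z' (s j) = z j) -> psent z' (tr s p) = psent z p.
Proof. move=> H; rewrite /psent /=; congr Sent; apply: functional_extensionality => i; exact: H. Qed.
Lemma map_pv_tr m m' (s : 'I_m -> 'I_m') (l : seq (plc m)) :
  map (@pv _) (map (tr s) l) = map (psubst (finfun s)) (map (@pv _) l).
Proof. by elim: l => [|p l IH] //=; rewrite IH pv_tr. Qed.

Lemma sent_inj n (r1 r2 : S n) x1 x2 : Sent r1 x1 = Sent r2 x2 -> r1 = r2 /\ x1 = x2.
Proof.
move=> H; split.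
  have H1 := f_equal (fun s => existT (fun n => S n) (sn s) (sr s)) H.
  exact: (inj_pair2_eq_dec _ PeanoNat.Nat.eq_dec _ _ _ _ H1).
have H1 := f_equal (fun s => existT (fun n => 'I_n -> term) (sn s) (sx s)) H.
exact: (inj_pair2_eq_dec _ PeanoNat.Nat.eq_dec _ _ _ _ H1).
Qed.

Definition en m (z : 'I_m -> term) (j : 'I_m) : 'I_m :=
  epsilon (inhabits j) (fun k => z k = z j).
Lemma en_val m (z : 'I_m -> term) j : z (en z j) = z j.
Proof. by rewrite /en; apply: (epsilon_spec (inhabits j) (fun k => z k = z j)); exists j. Qed.
Lemma en_eq m (z : 'I_m -> term) j j' : z j = z j' -> en z j = en z j'.
Proof.
move=> H; rewrite /en H.
by have -> : inhabits j = inhabits j' by apply: proof_irrelevance.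
Qed.

Definition catf T m1 m2 (z1 : 'I_m1 -> T) (z2 : 'I_m2 -> T) (i : 'I_(m1 + m2)) : T :=
  match split i with inl a => z1 a | inr b => z2 b end.
Lemma catf_l T m1 m2 (z1 : 'I_m1 -> T) (z2 : 'I_m2 -> T) a : catf z1 z2 (lshift m2 a) = z1 a.
Proof. by rewrite /catf -[lshift m2 a]/(unsplit (inl a)) unsplitK. Qed.
Lemma catf_r T m1 m2 (z1 : 'I_m1 -> T) (z2 : 'I_m2 -> T) a : catf z1 z2 (rshift m1 a) = z2 a.
Proof. by rewrite /catf -[rshift m1 a]/(unsplit (inr a)) unsplitK. Qed.

Definition addS (G : sent -> Prop) (f : sent) := fun x => G x \/ x = f.

Lemma PRef_cut (G D : sent -> Prop) (f : sent) :
  PRef (addS G f) D -> PRef G (addS D f) -> PRef G D.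
Proof.
case: f => n r x.
move=> [m1 [z1 [G1 [D1 [hG1 [hD1 le1]]]]]] [m2 [z2 [G2 [D2 [hG2 [hD2 le2]]]]]].
pose z := catf z1 (catf z2 x).
pose s1 := fun a => en z (lshift (m2 + n) a).
pose s2 := fun b => en z (rshift m1 (lshift n b)).
pose s3 := fun j => en z (rshift m1 (rshift m2 j)).
have zs1 a : z (s1 a) = z1 a by rewrite en_val /z catf_l.
have zs2 b : z (s2 b) = z2 b by rewrite en_val /z catf_r catf_l.
have zs3 j : z (s3 j) = x j by rewrite en_val /z !catf_r.
pose F := psubst (finfun s3) r.
have key1 (p : plc m1) : psent z1 p = Sent r x -> pv (tr s1 p) = F.
  case: p => np rp ap; rewrite /psent /= => H; have E := f_equal sn H; simpl in E; subst np.
  case: (sent_inj H) => -> Hx; rewrite /pv /F /=; congr psubst; apply/ffunP => i.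
  rewrite !ffunE; apply: en_eq; rewrite /z catf_l !catf_r.
  by have := f_equal (fun f => f i) Hx.
have key2 (p : plc m2) : psent z2 p = Sent r x -> pv (tr s2 p) = F.
  case: p => np rp ap; rewrite /psent /= => H; have E := f_equal sn H; simpl in E; subst np.
  case: (sent_inj H) => -> Hx; rewrite /pv /F /=; congr psubst; apply/ffunP => i.
  rewrite !ffunE; apply: en_eq; rewrite /z catf_r catf_l !catf_r.
  by have := f_equal (fun f => f i) Hx.
pose G1' := filter (fun p => `[< G (psent z p) >]) (map (tr s1) G1).
pose D2' := filter (fun p => `[< D (psent z p) >]) (map (tr s2) D2).
exists (m1 + (m2 + n)), z, (G1' ++ map (tr s2) G2), (map (tr s1) D1 ++ D2').
split; [|split].
- move=> p Hp; case: (proj1 (In_cat _ _ _) Hp) => {}Hp.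
    by case: (proj1 (In_filter _ _ _) Hp) => _ /asboolP.
  by case: (In_map Hp) => q [Hq ->]; rewrite (psent_tr _ zs2); apply: hG2.
- move=> p Hp; case: (proj1 (In_cat _ _ _) Hp) => {}Hp.
    by case: (In_map Hp) => q [Hq ->]; rewrite (psent_tr _ zs1); apply: hD1.
  by case: (proj1 (In_filter _ _ _) Hp) => _ /asboolP.
have E1 : meetl (map (@pv _) (map (tr s1) G1)) <=L joinl (map (@pv _) (map (tr s1) D1)).
  rewrite !map_pv_tr -(sub_meetl HL) -(sub_joinl HL); exact: (sub_mono HL).
have E2 : meetl (map (@pv _) (map (tr s2) G2)) <=L joinl (map (@pv _) (map (tr s2) D2)).
  rewrite !map_pv_tr -(sub_meetl HL) -(sub_joinl HL); exact: (sub_mono HL).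
rewrite map_cat map_cat (meetl_cat HL) (joinl_cat HL).
apply: (@dcut _ HL _ _ _ _ _ F).
- apply: (le_trans HL) E1.
  apply: (meetl_sub HL) => y Hy.
  case: (In_map Hy) => p [Hp ->]; case: (In_map Hp) => q [Hq ->].
  case: (hG1 q Hq) => [Hg|Hf].
    left; apply: map_In; apply/(In_filter _ _ _); split; first exact: map_In.
    by apply/asboolP; rewrite (psent_tr _ zs1).
  by right; apply: key1.
- apply: (le_trans HL E2).
  apply: (joinl_sub HL) => y Hy.
  case: (In_map Hy) => p [Hp ->]; case: (In_map Hp) => q [Hq ->].
  case: (hD2 q Hq) => [Hg|Hf].
    left; apply: map_In; apply/(In_filter _ _ _); split; first exact: map_In.
    by apply/asboolP; rewrite (psent_tr _ zs2).
  by right; apply: key2.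
Qed.


Lemma snoc_lift (W : Type) n (x : 'I_n -> W) y j : snoc x y (lift ord_max j) = x j.
Proof. by rewrite /snoc liftK. Qed.
Lemma snoc_max (W : Type) n (x : 'I_n -> W) y : snoc x y ord_max = y.
Proof. by rewrite /snoc unlift_none. Qed.

Lemma eq_map_In (A B : Type) (f g : A -> B) (l : seq A) :
  (forall x, List.In x l -> f x = g x) -> map f l = map g l.
Proof.
elim: l => [|x l IH] //= H; rewrite H; last by left.
by congr cons; apply: IH => y Hy; apply: H; right.
Qed.

Lemma PRef_elim (G D : sent -> Prop) n (r : S n.+1) (t : 'I_n -> term) (c : term) :
  (forall j, t j <> c) ->
  (forall f, G f -> forall j, sx f j <> c) ->
  (forall f, D f -> forall j, sx f j <> c) ->
  PRef (addS G (Sent r (snoc t c))) D -> PRef (addS G (Sent (pex r) t)) D.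
Proof.
move=> Ht HG HD [m [z [Gs [Ds [hG [hD le]]]]]].
pose zt := catf z t.
pose pi := fun j : 'I_(m + n) => if `[< zt j = c >] then ord_max else widen_ord (leqnSn _) (en zt j).
pose sg := fun j : 'I_m => pi (lshift n j).
pose sg' := fun j : 'I_m => en zt (lshift n j).
pose a0 := fun k : 'I_n => en zt (rshift m k).
pose B := psubst (@beta_of 1 (m + n) n (finfun a0) ord0) r.
have zsg' j : zt (sg' j) = z j by rewrite en_val /zt catf_l.
have avoid (p : plc m) : (forall j, sx (psent z p) j <> c) ->
    pv (tr sg p) = psubst (cyl (m + n)) (pv (tr sg' p)).
  move=> Hc; rewrite /pv /= -subC' //; congr psubst; apply/ffunP => k.
  rewrite !ffunE /sg /pi /=.
  case: asboolP => [E|_]; last by [].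
  by case: (Hc k); rewrite /= -E /zt catf_l.
have keyB (p : plc m) : psent z p = Sent r (snoc t c) -> pv (tr sg p) = B.
  case: p => np rp ap; rewrite /psent /= => H; have E := f_equal sn H; simpl in E; subst np.
  case: (sent_inj H) => -> Hx; rewrite /pv /B /=; congr psubst; apply/ffunP => k.
  have Hk j : z (ap j) = snoc t c j by have := f_equal (fun f => f j) Hx.
  rewrite !ffunE; apply: val_inj; rewrite /sg /pi /=.
  case: unliftP => [j' ->|->].
    case: asboolP => [E|_].
      by case: (Ht j'); rewrite -(snoc_lift t c) -Hk -E /zt catf_l.
    rewrite ffunE /= /a0; f_equal; apply: en_eq.
    by rewrite /zt catf_l catf_r Hk snoc_lift.
  case: asboolP => [_|[]]; first by rewrite /= addn0.
  by rewrite /zt catf_l Hk snoc_max.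
pose Gc := filter (fun p => `[< G (psent z p) >]) Gs.
pose C0 := meetl (map (@pv _) (map (tr sg') Gc)).
pose D0 := joinl (map (@pv _) (map (tr sg') Ds)).
have le2 : meetl (map (@pv _) (map (tr sg) Gs)) <=L joinl (map (@pv _) (map (tr sg) Ds)).
  rewrite !map_pv_tr -(sub_meetl HL) -(sub_joinl HL); exact: (sub_mono HL).
have eqD : joinl (map (@pv _) (map (tr sg) Ds)) = psubst (cyl (m + n)) D0.
  rewrite /D0 (sub_joinl HL) -!map_comp; congr joinl; apply: eq_map_In => p Hp /=.
  by apply: avoid; apply: HD; apply: hD.
have leC : mt B (psubst (cyl (m + n)) C0) <=L meetl (map (@pv _) (map (tr sg) Gs)).
  rewrite /C0 (sub_meetl HL) (mC HL); apply: (meetl_sub HL) => y Hy.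
  case: (In_map Hy) => p [Hp ->]; case: (In_map Hp) => q [Hq ->].
  case: (hG q Hq) => [Hg|Hf]; last by right; apply: keyB.
  left; rewrite (avoid q); last by apply: HG.
  apply: map_In; apply: map_In; apply: map_In; apply/(In_filter _ _ _); split=> //.
  exact/asboolP.
have le3 : mt (psubst (finfun a0) (pex r)) C0 <=L D0.
  rewrite -(ex_subst HL) -(ax9 HL).
  apply: (le_trans HL _ (ex_cyl_le HL D0)); apply: (ex_mono HL).
  rewrite -eqD; apply: (le_trans HL _ le2); exact: leC.
exists (m + n), zt, (Plc (pex r) a0 :: map (tr sg') Gc), (map (tr sg') Ds).
split; [|split] => //.
- move=> p [<-|Hp].
    right; rewrite /psent /=; congr Sent; apply: functional_extensionality => k.
    by rewrite en_val /zt catf_r.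
  case: (In_map Hp) => q [Hq ->]; rewrite (psent_tr _ zsg').
  by case: (proj1 (In_filter _ _ _) Hq) => _ /asboolP; left.
- move=> p Hp; case: (In_map Hp) => q [Hq ->]; rewrite (psent_tr _ zsg').
  exact: hD.
Qed.


Record inst := Inst { in_n : nat; in_r : S in_n.+1; in_t : 'I_in_n -> term }.
Arguments in_t i _ : clear implicits.
Definition wit (i : inst) : term := tsk (in_r i) (in_t i).
Definition concl (i : inst) : sent := Sent (in_r i) (snoc (in_t i) (wit i)).
Definition prem (i : inst) : sent := Sent (pex (in_r i)) (in_t i).
Definition decode (x : term) : option inst :=
  match x with tsk n r t => Some (Inst r t) | _ => None end.
Lemma wit_inj i j : wit i = wit j -> i = j.
Proof.
case: i => n r t; case: j => n' r' t' H; have := f_equal decode H => /= E.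
exact: (f_equal (odflt (Inst r t)) E).
Qed.

Fixpoint depth (x : term) : nat :=
  match x with tb _ _ => 0 | tsk n r t => (\max_(k < n) depth (t k)).+1 end.
Lemma depth_lt n (r : S n.+1) (t : 'I_n -> term) k : depth (t k) < depth (tsk r t).
Proof. by rewrite /= ltnS; apply: (leq_bigmax (F := fun k => depth (t k))). Qed.

Definition brG (I : seq inst) (b : inst -> bool) (f : sent) :=
  exists i, List.In i I /\ b i /\ f = concl i.
Definition brD (I : seq inst) (b : inst -> bool) (f : sent) :=
  exists i, List.In i I /\ ~~ b i /\ f = prem i.
Definition uS (A B : sent -> Prop) := fun f => A f \/ B f.
Definition HRef (G D : sent -> Prop) :=
  exists I, forall b, PRef (uS G (brG I b)) (uS D (brD I b)).

Lemma PRef_HRef G D : PRef G D -> HRef G D.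
Proof.
move=> H; exists [::] => b; apply: PRef_mono H => f Hf; by left.
Qed.

Lemma HRef_cut (G D : sent -> Prop) (f : sent) :
  HRef (addS G f) D -> HRef G (addS D f) -> HRef G D.
Proof.
move=> [I1 H1] [I2 H2]; exists (I1 ++ I2) => b.
apply: (@PRef_cut _ _ f).
  apply: PRef_mono (H1 b).
    move=> g [[Hg|->]|[i [Hi [Hb ->]]]]; [by left;left|by right|left;right].
    by exists i; split=> //; apply/In_cat; left.
  move=> g [Hg|[i [Hi [Hb ->]]]]; [by left|right].
  by exists i; split=> //; apply/In_cat; left.
apply: PRef_mono (H2 b).
  move=> g [Hg|[i [Hi [Hb ->]]]]; [by left|right].
  by exists i; split=> //; apply/In_cat; right.
move=> g [[Hg|->]|[i [Hi [Hb ->]]]]; [by left;left|by right|left;right].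
by exists i; split=> //; apply/In_cat; right.
Qed.

Definition is_base (x : term) := exists p j, x = tb p j.

Lemma max_depth (I : seq inst) : I <> [::] ->
  exists i, List.In i I /\ forall j, List.In j I -> depth (wit j) <= depth (wit i).
Proof.
elim: I => [//|i I IH] _.
case: I IH => [|i' I'] IH.
  by exists i; split; [left|move=> j [<-|[]]].
case: IH => // k [Hk Hmax].
case: (leqP (depth (wit i)) (depth (wit k))) => H.
  exists k; split; first by right.
  by move=> j [<-|Hj] //; apply: Hmax.
exists i; split; first by left.
move=> j [<-|Hj] //; apply: leq_trans (Hmax _ Hj) (ltnW H).
Qed.

Lemma size_filter_lt (A : Type) (f : pred A) (s : seq A) x :
  List.In x s -> ~~ f x -> size (filter f s) < size s.
Proof.
elim: s => [|y s IH] //= [<-|Hx] Hf.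
  by rewrite (negbTE Hf) ltnS size_filter count_size.
case: (f y) => /=; first by rewrite ltnS; apply: IH.
by apply: leq_trans (IH Hx Hf) _.
Qed.

Lemma Henkin_cons (G D : sent -> Prop) :
  (forall f, G f -> forall j, is_base (sx f j)) ->
  (forall f, D f -> forall j, is_base (sx f j)) ->
  HRef G D -> PRef G D.
Proof.
move=> HG HD [I HI].
elim: {I} (size I) {-2}I (leqnn (size I)) G D HG HD HI => [|N IHN] I HN G D HG HD HI.
  case: I HN HI => // _ HI; apply: PRef_mono (HI (fun _ => true)).
    by move=> f [Hf|[i [[] _]]].
  by move=> f [Hf|[i [[] _]]].
case E: I => [|i0 I0].
  apply: PRef_mono (HI (fun _ => true)).
    by move=> f [Hf|[i [Hi _]]]; [|rewrite E in Hi].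
  by move=> f [Hf|[i [Hi _]]]; [|rewrite E in Hi].
have NE : I <> [::] by rewrite E.
case: (max_depth NE) => i [Hi Hmax].
pose I' := filter (fun j => ~~ `[< j = i >]) I.
have HI' : size I' <= N.
  rewrite -ltnS; apply: leq_trans HN; apply: (size_filter_lt Hi).
  by rewrite negbK; apply/asboolP.
have InI' j : List.In j I' -> List.In j I /\ j <> i.
  by move=> /(In_filter _ _ _) [Hj /asboolP].
pose G' (b' : inst -> bool) := uS G (brG I' b').
pose D' (b' : inst -> bool) := uS D (brD I' b').
have fresh_t j k : List.In j I -> in_t j k <> wit i.
  move=> Hj Ew; have := depth_lt (in_r j) (in_t j) k.
  by rewrite Ew -/(wit j) ltnNge Hmax.
apply: (IHN I' HI' G D HG HD) => b'.
apply: (@PRef_cut _ _ (prem i)).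
  apply: (@PRef_elim (G' b') (D' b') _ (in_r i) (in_t i) (wit i)).
  - move=> k Ew; have := depth_lt (in_r i) (in_t i) k.
    by rewrite Ew -/(wit i) ltnn.
  - move=> f [Hf|[j [Hj [_ ->]]]] k.
      by case: (HG f Hf k) => p [l ->].
    case: (InI' j Hj) => Hj1 Hji; rewrite /concl /=.
    case: (unliftP ord_max k) => [k' ->|->].
      by rewrite snoc_lift; apply: fresh_t.
    by rewrite snoc_max => /wit_inj.
  - move=> f [Hf|[j [Hj [_ ->]]]] k.
      by case: (HD f Hf k) => p [l ->].
    by case: (InI' j Hj) => Hj1 _; apply: fresh_t.
  apply: PRef_mono (HI (fun j => if `[< j = i >] then true else b' j)).
    move=> f [Hf|[j [Hj [Hb ->]]]]; first by left; left.
    case: (asboolP (j = i)) Hb => [->|Hji] Hb; first by right.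
    left; right; exists j; split=> //; apply/(In_filter _ _ _); split=> //.
    by apply/negP => /asboolP.
  move=> f [Hf|[j [Hj [Hb ->]]]]; first by left.
  case: (asboolP (j = i)) Hb => [->|Hji] Hb //.
  right; exists j; split=> //; apply/(In_filter _ _ _); split=> //.
  by apply/negP => /asboolP.
apply: PRef_mono (HI (fun j => if `[< j = i >] then false else b' j)).
  move=> f [Hf|[j [Hj [Hb ->]]]]; first by left.
  case: (asboolP (j = i)) Hb => [->|Hji] Hb //.
  right; exists j; split=> //; apply/(In_filter _ _ _); split=> //.
  by apply/negP => /asboolP.
move=> f [Hf|[j [Hj [Hb ->]]]]; first by left; left.
case: (asboolP (j = i)) Hb => [->|Hji] Hb; first by right.
left; right; exists j; split=> //; apply/(In_filter _ _ _); split=> //.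
by apply/negP => /asboolP.
Qed.

End Henkin.

Section Sep.
Variable L : peAlg.
Hypothesis HL : pe_axioms L.
Hypothesis Hnd : ~ ple (pone L 1) (pzero L 1).

Local Notation S := (psort L).
Local Notation "x <=L y" := (ple x y) (at level 70).
Local Notation mt := (@pmeet L _).
Local Notation jn := (@pjoin L _).
Local Notation base := (base L).
Local Notation term := (term L).
Local Notation sent := (sent L).

Lemma take_bound (ks : seq nat) i l : i < size ks -> l < nth 0 ks i ->
  l + sumn (take i ks) < sumn ks.
Proof.
move=> Hi Hl.
have E : sumn ks = sumn (take i ks) + (nth 0 ks i + sumn (drop i.+1 ks)).
  by rewrite -{1}(cat_take_drop i ks) sumn_cat (drop_nth 0 Hi).
rewrite E addnC ltn_add2l.
exact: leq_trans Hl (leq_addr _ _).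
Qed.

Lemma blk_proof (ps : seq base) d (i : 'I_(size (map (@bn L) ps))) (l : 'I_(bn (nth d ps i))) :
  l + sumn (take i (map (@bn L) ps)) < sumn (map (@bn L) ps).
Proof.
apply: take_bound => //; rewrite (nth_map d); first exact: ltn_ord.
by rewrite -(size_map (@bn L)).
Qed.

Definition blk (ps : seq base) d (i : 'I_(size (map (@bn L) ps))) :
  {ffun 'I_(bn (nth d ps i)) -> 'I_(sumn (map (@bn L) ps))} :=
  [ffun l => Ordinal (blk_proof l)].
Arguments blk ps d i : clear implicits.

Lemma cast_sub n1 n2 (E : n1 = n2) k (a : {ffun 'I_n2 -> 'I_k}) (b : {ffun 'I_n1 -> 'I_k}) (x : S n1) :
  (forall l, val (a (cast_ord E l)) = val (b l)) -> psubst a (eq_rect n1 S x n2 E) = psubst b x.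
Proof.
destruct E => H; congr psubst; apply/ffunP => l; apply: val_inj; by rewrite -H cast_ord_id.
Qed.
Lemma cast_ple n1 n2 (E : n1 = n2) (x y : S n1) :
  ple (eq_rect n1 S x n2 E) (eq_rect n1 S y n2 E) -> ple x y.
Proof. by destruct E. Qed.

Lemma ax0B (ps : seq base) d :
  ple (\big[@pmeet L _/pone L _]_(i < size (map (@bn L) ps)) psubst (blk ps d i) (br (nth d ps i)))
      (\big[@pjoin L _/pzero L _]_(i < size (map (@bn L) ps)) psubst (blk ps d i) (bs (nth d ps i))) ->
  exists i : 'I_(size (map (@bn L) ps)), ple (br (nth d ps i)) (bs (nth d ps i)).
Proof.
set ks := map (@bn L) ps.
have E (i : 'I_(size ks)) : bn (nth d ps i) = nth 0 ks i.
  by rewrite (nth_map d) // -(size_map (@bn L)).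
pose r (i : 'I_(size ks)) := eq_rect _ S (br (nth d ps i)) _ (E i).
pose s (i : 'I_(size ks)) := eq_rect _ S (bs (nth d ps i)) _ (E i).
have Hr i : psubst (pcyl i) (r i) = psubst (blk ps d i) (br (nth d ps i)).
  by apply: cast_sub => l; rewrite !ffunE.
have Hs i : psubst (pcyl i) (s i) = psubst (blk ps d i) (bs (nth d ps i)).
  by apply: cast_sub => l; rewrite !ffunE.
move=> H; case: (ax0 HL (r := r) (s := s)) => [|i Hi].
  rewrite (eq_bigr _ (fun i _ => Hr i)) (eq_bigr _ (fun i _ => Hs i)); exact: H.
by exists i; exact: (cast_ple Hi).
Qed.

Lemma big_meet_le_seq k N (F : 'I_N -> S k) i (r : seq 'I_N) :
  i \in r -> \big[@pmeet L k/pone L k]_(j <- r) F j <=L F i.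
Proof.
elim: r => [//|j s IH].
rewrite inE big_cons => /orP [/eqP ->|Hi]; first exact: (meet_l HL).
have H1 := IH Hi. have H2 := @meet_r L HL k (F j) (\big[@pmeet L k/pone L k]_(j <- s) F j).
exact: (le_trans HL H2 H1).
Qed.
Lemma big_join_ge_seq k N (F : 'I_N -> S k) i (r : seq 'I_N) :
  i \in r -> F i <=L \big[@pjoin L k/pzero L k]_(j <- r) F j.
Proof.
elim: r => [//|j s IH].
rewrite inE big_cons => /orP [/eqP ->|Hi]; first exact: (join_l HL).
apply: (le_trans HL (IH Hi)); exact: (join_r HL).
Qed.
Lemma big_meet_le k N (F : 'I_N -> S k) i : \big[@pmeet L k/pone L k]_(j < N) F j <=L F i.
Proof. exact: (big_meet_le_seq F (mem_index_enum i)). Qed.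
Lemma big_join_ge k N (F : 'I_N -> S k) i : F i <=L \big[@pjoin L k/pzero L k]_(j < N) F j.
Proof. exact: (big_join_ge_seq F (mem_index_enum i)). Qed.
Lemma meetl_glb k (s : seq (S k)) x : (forall y, List.In y s -> x <=L y) -> x <=L meetl s.
Proof.
elim: s => [|y s IH] H /=; first exact: (le1 HL).
by apply: (meet_glb HL) => //; [apply: H; left|apply: IH => y' Hy; apply: H; right].
Qed.
Lemma joinl_lub k (s : seq (S k)) x : (forall y, List.In y s -> y <=L x) -> joinl s <=L x.
Proof.
elim: s => [|y s IH] H /=; first exact: (le0 HL).
by apply: (join_lub HL) => //; [apply: H; left|apply: IH => y' Hy; apply: H; right].
Qed.

Lemma In_nth_ssr (A : Type) (d : A) (s : seq A) i : i < size s -> List.In (nth d s i) s.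
Proof. elim: s i => [|x s IH] [|i] //= H; [by left|right; exact: IH]. Qed.
Lemma nth_ssr_In (A : Type) (d : A) (s : seq A) x : List.In x s -> exists i, i < size s /\ nth d s i = x.
Proof.
elim: s => [|y s IH] //= [->|H]; first by exists 0.
by case: (IH H) => i [H1 H2]; exists i.+1.
Qed.

Definition iota (p : base) : 'I_(bn p) -> term := fun j => tb p j.
Arguments iota p _ : clear implicits.
Definition G0 (f : sent) := exists p : base, ~ ple (br p) (bs p) /\ f = Sent (br p) (iota p).
Definition D0 (f : sent) := exists p : base, ~ ple (br p) (bs p) /\ f = Sent (bs p) (iota p).

Lemma sep_cons : ~ PRef G0 D0.
Proof.
move=> [m [z [Gs [Ds [hG [hD le]]]]]].
pose dummy := @Base L 1 (pone L 1) (pzero L 1).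
pose pickG (f : sent) := epsilon (inhabits dummy)
   (fun p : base => ~ ple (br p) (bs p) /\ f = Sent (br p) (iota p)).
pose pickD (f : sent) := epsilon (inhabits dummy)
   (fun p : base => ~ ple (br p) (bs p) /\ f = Sent (bs p) (iota p)).
have pickGP g : List.In g Gs ->
    ~ ple (br (pickG (psent z g))) (bs (pickG (psent z g))) /\
    psent z g = Sent (br (pickG (psent z g))) (iota (pickG (psent z g))).
  move=> Hg; apply: (epsilon_spec (inhabits dummy)
    (fun p : base => ~ ple (br p) (bs p) /\ psent z g = Sent (br p) (iota p))); exact: hG.
have pickDP g : List.In g Ds ->
    ~ ple (br (pickD (psent z g))) (bs (pickD (psent z g))) /\
    psent z g = Sent (bs (pickD (psent z g))) (iota (pickD (psent z g))).
  move=> Hg; apply: (epsilon_spec (inhabits dummy)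
    (fun p : base => ~ ple (br p) (bs p) /\ psent z g = Sent (bs p) (iota p))); exact: hD.
pose ps := dummy :: (map (fun g => pickG (psent z g)) Gs ++ map (fun g => pickD (psent z g)) Ds).
pose ks := map (@bn L) ps.
have allnle q : List.In q ps -> ~ ple (br q) (bs q).
  move=> [<-|/In_cat [Hq|Hq]] //.
    by case: (In_map Hq) => g [Hg ->]; case: (pickGP g Hg).
  by case: (In_map Hq) => g [Hg ->]; case: (pickDP g Hg).
pose idx (q : base) := epsilon (inhabits 0) (fun i => i < size ps /\ nth dummy ps i = q).
have idxP q : List.In q ps -> idx q < size ps /\ nth dummy ps (idx q) = q.
  move=> Hq; apply: (epsilon_spec (inhabits 0) (fun i => i < size ps /\ nth dummy ps i = q)).
  exact: nth_ssr_In.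
have M0 : 0 < sumn ks by [].
pose d0 : 'I_(sumn ks) := Ordinal M0.
pose sg := fun j : 'I_m => insubd d0 (match z j with tb p l => l + sumn (take (idx p) ks) | _ => 0 end).
have key (F : forall p : base, S (bn p)) (g : plc L m) q (i : 'I_(size ks)) :
    List.In q ps -> val i = idx q -> psent z g = Sent (F q) (iota q) ->
    psubst (finfun sg) (pv g) = psubst (blk ps dummy i) (F (nth dummy ps i)).
  move=> Hq Hi Hg.
  have Hnth : nth dummy ps i = q by rewrite Hi; case: (idxP q Hq).
  have Hblk : forall l, val (blk ps dummy i l) = l + sumn (take i ks) by move=> l; rewrite ffunE.
  move: (blk ps dummy i) Hblk; rewrite Hnth => a Ha.
  case: g Hg => ng rg ag; rewrite /psent /= => H; have E := f_equal (@sn L) H; simpl in E; subst ng.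
  case: (sent_inj H) => Hr Hx; rewrite /pv /= Hr -subC' //; congr psubst; apply/ffunP => l.
  apply: val_inj; rewrite !ffunE Ha /sg.
  have -> : z (ag l) = tb q l by have := f_equal (fun f => f l) Hx.
  have Hi' : nat_of_ord i = idx q := Hi.
  rewrite insubdK; first by rewrite Hi'.
  apply: take_bound.
    by rewrite size_map; case: (idxP q Hq).
  by rewrite (nth_map dummy); case: (idxP q Hq) => // _ ->.
have Hsz q : List.In q ps -> idx q < size ks by rewrite size_map; case/idxP.
have HpsG g : List.In g Gs -> List.In (pickG (psent z g)) ps.
  by move=> Hg; right; apply/In_cat; left; apply: map_In.
have HpsD g : List.In g Ds -> List.In (pickD (psent z g)) ps.
  by move=> Hg; right; apply/In_cat; right; apply: map_In.
have le2 := sub_mono HL (finfun sg) le.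
rewrite (sub_meetl HL) (sub_joinl HL) in le2.
case: (@ax0B ps dummy) => [|i Hi].
  apply: (le_trans HL _ (le_trans HL le2 _)).
    apply: meetl_glb => y Hy; case: (In_map Hy) => x [Hx ->]; case: (In_map Hx) => g [Hg ->].
    have Hq := HpsG g Hg.
    rewrite (key (@br L) g _ (Ordinal (Hsz _ Hq)) Hq erefl); last by case: (pickGP g Hg).
    exact: big_meet_le.
  apply: joinl_lub => y Hy; case: (In_map Hy) => x [Hx ->]; case: (In_map Hx) => g [Hg ->].
  have Hq := HpsD g Hg.
  rewrite (key (@bs L) g _ (Ordinal (Hsz _ Hq)) Hq erefl); last by case: (pickDP g Hg).
  exact: big_join_ge.
apply: (allnle (nth dummy ps i)) => //; apply: In_nth_ssr.
by rewrite -(size_map (@bn L)).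
Qed.

End Sep.

Section Compact.
Variable L : peAlg.
Hypothesis HL : pe_axioms L.
Local Notation S := (psort L).
Local Notation "x <=L y" := (ple x y) (at level 70).
Local Notation sent := (sent L).
Local Notation inst := (inst L).

Lemma HRef_mono (G D G' D' : sent -> Prop) :
  (forall x, G x -> G' x) -> (forall x, D x -> D' x) -> HRef G D -> HRef G' D'.
Proof.
move=> HG HD [I HI]; exists I => b; apply: PRef_mono (HI b).
  by move=> f [Hf|Hf]; [left; apply: HG|right].
by move=> f [Hf|Hf]; [left; apply: HD|right].
Qed.

Lemma PRef_fin (G D : sent -> Prop) : PRef G D ->
  exists lg ld : seq sent, (forall f, List.In f lg -> G f) /\ (forall f, List.In f ld -> D f) /\
    PRef (fun f => List.In f lg) (fun f => List.In f ld).
Proof.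
move=> [m [z [Gs [Ds [hG [hD le]]]]]].
exists (map (psent z) Gs), (map (psent z) Ds); split; [|split].
- by move=> f Hf; case: (In_map Hf) => p [Hp ->]; apply: hG.
- by move=> f Hf; case: (In_map Hf) => p [Hp ->]; apply: hD.
exists m, z, Gs, Ds; split; [|split] => // p Hp; exact: map_In.
Qed.

Lemma HRef_fin_aux (I : seq inst) : forall (G D : sent -> Prop),
  (forall b, PRef (uS G (brG I b)) (uS D (brD I b))) ->
  exists lg ld : seq sent, (forall f, List.In f lg -> G f) /\ (forall f, List.In f ld -> D f) /\
    forall b, PRef (uS (fun f => List.In f lg) (brG I b)) (uS (fun f => List.In f ld) (brD I b)).
Proof.
elim: I => [|i I IH] G D H.
  case: (PRef_fin (H (fun _ => true))) => lg [ld [Hg [Hd Hr]]].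
  exists lg, ld; split; [|split].
  - by move=> f /Hg [//|[j [[] _]]].
  - by move=> f /Hd [//|[j [[] _]]].
  by move=> b; apply: PRef_mono Hr => f Hf; left.
pose upd (v : bool) (b' : inst -> bool) := fun j => if `[< j = i >] then v else b' j.
have H1 : forall b', PRef (uS (addS G (concl i)) (brG I b')) (uS D (brD I b')).
  move=> b'; apply: PRef_mono (H (upd true b')).
    move=> f [Hf|[j [Hj [Hb ->]]]]; first by left; left.
    rewrite /upd in Hb; case: (asboolP (j = i)) Hb => [->|Hji] Hb; first by left; right.
    by right; exists j; split; [case: Hj => [E|//]; case: Hji; rewrite E|split].
  move=> f [Hf|[j [Hj [Hb ->]]]]; first by left.
  rewrite /upd in Hb; case: (asboolP (j = i)) Hb => [->|Hji] Hb //.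
  by right; exists j; split; [case: Hj => [E|//]; case: Hji; rewrite E|split].
have H2 : forall b', PRef (uS G (brG I b')) (uS (addS D (prem i)) (brD I b')).
  move=> b'; apply: PRef_mono (H (upd false b')).
    move=> f [Hf|[j [Hj [Hb ->]]]]; first by left.
    rewrite /upd in Hb; case: (asboolP (j = i)) Hb => [->|Hji] Hb //.
    by right; exists j; split; [case: Hj => [E|//]; case: Hji; rewrite E|split].
  move=> f [Hf|[j [Hj [Hb ->]]]]; first by left; left.
  rewrite /upd in Hb; case: (asboolP (j = i)) Hb => [->|Hji] Hb; first by left; right.
  by right; exists j; split; [case: Hj => [E|//]; case: Hji; rewrite E|split].
case: (IH _ _ H1) => lg1 [ld1 [Hg1 [Hd1 Hr1]]].
case: (IH _ _ H2) => lg2 [ld2 [Hg2 [Hd2 Hr2]]].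
exists (filter (fun f => `[< G f >]) (lg1 ++ lg2)), (filter (fun f => `[< D f >]) (ld1 ++ ld2)).
split; [|split].
- by move=> f /(In_filter _ _ _) [_ /asboolP].
- by move=> f /(In_filter _ _ _) [_ /asboolP].
move=> b; case Eb: (b i).
  apply: PRef_mono (Hr1 b).
    move=> f [Hf|[j [Hj [Hb ->]]]]; last by right; exists j; split=> //; right.
    case: (Hg1 f Hf) => [Hg|->]; last by right; exists i; split=> //; left.
    left; apply/(In_filter _ _ _); split; [by apply/In_cat; left|exact/asboolP].
  move=> f [Hf|[j [Hj [Hb ->]]]]; last by right; exists j; split=> //; right.
  left; apply/(In_filter _ _ _); split; [by apply/In_cat; left|exact/asboolP/Hd1].
apply: PRef_mono (Hr2 b).
  move=> f [Hf|[j [Hj [Hb ->]]]]; last by right; exists j; split=> //; right.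
  left; apply/(In_filter _ _ _); split; [by apply/In_cat; right|exact/asboolP/Hg2].
move=> f [Hf|[j [Hj [Hb ->]]]]; last by right; exists j; split=> //; right.
case: (Hd2 f Hf) => [Hd|->]; last by right; exists i; split; [left|rewrite Eb].
left; apply/(In_filter _ _ _); split; [by apply/In_cat; right|exact/asboolP].
Qed.

Lemma HRef_fin (G D : sent -> Prop) : HRef G D ->
  exists lg ld : seq sent, (forall f, List.In f lg -> G f) /\ (forall f, List.In f ld -> D f) /\
    HRef (fun f => List.In f lg) (fun f => List.In f ld).
Proof.
move=> [I HI]; case: (HRef_fin_aux HI) => lg [ld [H1 [H2 H3]]].
by exists lg, ld; split; [|split] => //; exists I.
Qed.

End Compact.

Section ModelND.
Variable L : peAlg.
Hypothesis HL : pe_axioms L.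
Hypothesis Hnd : ~ ple (pone L 1) (pzero L 1).
Local Notation S := (psort L).
Local Notation "x <=L y" := (ple x y) (at level 70).
Local Notation sent := (sent L).
Local Notation inst := (inst L).
Local Notation term := (term L).

Lemma init_cons : ~ HRef (@G0 L) (@D0 L).
Proof.
move=> H; apply: (sep_cons HL Hnd); apply: Henkin_cons => //.
- by move=> f [p [_ ->]] j; exists p, j.
- by move=> f [p [_ ->]] j; exists p, j.
Qed.

Definition PP (X : set (bool * sent)) :=
  ~ HRef (uS (@G0 L) (fun f => X (true, f))) (uS (@D0 L) (fun f => X (false, f))).

Lemma chain_cover (F : set (set (bool * sent))) : total_on F subset ->
  forall l : seq (bool * sent), (forall x, List.In x l -> (\bigcup_(X in F) X)%classic x) ->
  exists Y, (Y = set0 \/ F Y) /\ forall x, List.In x l -> Y x.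
Proof.
move=> Ht; elim=> [|x l IH] H.
  by exists set0; split=> //; left.
case: IH => [y Hy|Y [HY HYl]]; first by apply: H; right.
case: (H x (or_introl erefl)) => X FX Xx.
case: HY => [EY|FY].
  exists X; split; first by right.
  move=> y [<-|Hy] //; by have := HYl y Hy; rewrite EY.
case: (Ht _ _ FX FY) => [XY|YX].
  exists Y; split; first by right.
  by move=> y [<-|Hy]; [apply: XY|apply: HYl].
exists X; split; first by right.
by move=> y [<-|Hy]; [|apply: YX; apply: HYl].
Qed.

Lemma PP_chain (F : set (set (bool * sent))) :
  (F `<=` PP)%classic -> total_on F subset -> PP (\bigcup_(X in F) X)%classic.
Proof.
move=> HF Ht H.
case: (HRef_fin H) => lg [ld [Hg [Hd Hr]]].
pose l := map (fun f => (true, f)) (filter (fun f => ~~ `[< G0 f >]) lg) ++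
          map (fun f => (false, f)) (filter (fun f => ~~ `[< D0 f >]) ld).
case: (@chain_cover F Ht l) => [x Hx|Y [HY HYl]].
  case: (proj1 (In_cat _ _ _) Hx) => {}Hx; case: (In_map Hx) => f [Hf ->];
    case: (proj1 (In_filter _ _ _) Hf) => Hf1 /asboolP Hf2.
    by case: (Hg f Hf1).
  by case: (Hd f Hf1).
have HY' : HRef (uS (@G0 L) (fun f => Y (true, f))) (uS (@D0 L) (fun f => Y (false, f))).
  apply: HRef_mono Hr.
    move=> f Hf; case: (asboolP (G0 f)) => [|HG]; first by left.
    right; apply: HYl; apply/In_cat; left; apply: map_In; apply/(In_filter _ _ _); split=> //.
    exact/asboolP.
  move=> f Hf; case: (asboolP (D0 f)) => [|HD]; first by left.
  right; apply: HYl; apply/In_cat; right; apply: map_In; apply/(In_filter _ _ _); split=> //.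
  exact/asboolP.
case: HY => [EY|FY]; last exact: (HF _ FY HY').
apply: init_cons; apply: HRef_mono HY'.
  by move=> f [//|]; rewrite EY.
by move=> f [//|]; rewrite EY.
Qed.

Lemma self_ref (f : sent) : PRef (fun g => g = f) (fun g => g = f).
Proof.
case: f => n r x; exists n, x, [:: Plc r (fun i => i)], [:: Plc r (fun i => i)].
split; first by move=> p [<-|[]].
split; first by move=> p [<-|[]].
rewrite /= (m1 HL) (j0 HL); exact: (le_refl HL).
Qed.

Lemma pv_id n (r : S n) : pv (Plc r (fun i : 'I_n => i)) = r.
Proof. by rewrite /pv /=; apply: (subI' HL). Qed.

Lemma PRef11 m (z : 'I_m -> term) (g d : plc L m) f1 f2 :
  psent z g = f1 -> psent z d = f2 -> pv g <=L pv d ->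
  PRef (fun h => h = f1) (fun h => h = f2).
Proof.
move=> <- <- H; exists m, z, [:: g], [:: d]; split; first by move=> p [<-|[]].
split; first by move=> p [<-|[]].
by rewrite /= (m1 HL) (j0 HL).
Qed.
Lemma PRef12 m (z : 'I_m -> term) (g d1 d2 : plc L m) f1 f2 f3 :
  psent z g = f1 -> psent z d1 = f2 -> psent z d2 = f3 -> pv g <=L pjoin (pv d1) (pv d2) ->
  PRef (fun h => h = f1) (fun h => h = f2 \/ h = f3).
Proof.
move=> <- <- <- H; exists m, z, [:: g], [:: d1; d2]; split; first by move=> p [<-|[]].
split; first by move=> p [<-|[<-|[]]]; [left|right].
by rewrite /= (m1 HL) (j0 HL).
Qed.
Lemma PRef21 m (z : 'I_m -> term) (g1 g2 d : plc L m) f1 f2 f3 :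
  psent z g1 = f1 -> psent z g2 = f2 -> psent z d = f3 -> pmeet (pv g1) (pv g2) <=L pv d ->
  PRef (fun h => h = f1 \/ h = f2) (fun h => h = f3).
Proof.
move=> <- <- <- H; exists m, z, [:: g1; g2], [:: d]; split; first by move=> p [<-|[<-|[]]]; [left|right].
split; first by move=> p [<-|[]].
by rewrite /= (m1 HL) (j0 HL).
Qed.
Lemma PRef10 m (z : 'I_m -> term) (g : plc L m) f1 :
  psent z g = f1 -> pv g <=L pzero L m -> PRef (fun h => h = f1) (fun _ => False).
Proof.
move=> <- H; exists m, z, [:: g], [::]; split; first by move=> p [<-|[]].
split; first by move=> p [].
by rewrite /= (m1 HL).
Qed.
Lemma PRef01 m (z : 'I_m -> term) (d : plc L m) f1 :
  psent z d = f1 -> pone L m <=L pv d -> PRef (fun _ => False) (fun h => h = f1).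
Proof.
move=> <- H; exists m, z, [::], [:: d]; split; first by move=> p [].
split; first by move=> p [<-|[]].
by rewrite /= (j0 HL).
Qed.

Lemma widen_lift n (i : 'I_n) : widen_ord (leqnSn n) i = lift ord_max i.
Proof. by apply: val_inj; rewrite /= /bump leqNgt ltn_ord. Qed.

Lemma embeds_nd : embeds_in_A L.
Proof.
case: (@Zorn_bigcup _ PP PP_chain) => A [PA Amax].
pose Ga f := uS (@G0 L) (fun f => A (true, f)) f.
pose Da f := uS (@D0 L) (fun f => A (false, f)) f.
have no_ref (G' D' : sent -> Prop) : (forall f, G' f -> Ga f) -> (forall f, D' f -> Da f) ->
    PRef G' D' -> False.
  by move=> H1 H2 H; apply: PA; apply: PRef_HRef; apply: PRef_mono H.
have excl f : Ga f -> Da f -> False.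
  by move=> H1 H2; apply: (no_ref _ _ _ _ (self_ref f)) => g ->.
have tot f : Ga f \/ Da f.
  case: (classic (Ga f)) => [|nG]; first by left.
  case: (classic (Da f)) => [|nD]; first by right.
  exfalso; apply: PA; apply: (@HRef_cut _ HL _ _ f).
    pose B : set (bool * sent) := fun x => A x \/ x = (true, f).
    have : ~ PP B.
      apply: Amax; split; first by move=> x Ax; left.
      by move=> /(_ (true, f)) H; apply: nG; right; apply: H; right.
    move/NNPP; apply: HRef_mono.
      move=> g [H|[H|H]]; [by left; left|by left; right|by case: H => ->; right].
    move=> g [H|[H|H]]; [by left|by right|by case: H].
  pose B : set (bool * sent) := fun x => A x \/ x = (false, f).
  have : ~ PP B.
    apply: Amax; split; first by move=> x Ax; left.
    by move=> /(_ (false, f)) H; apply: nD; right; apply: H; right.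
  move/NNPP; apply: HRef_mono.
    move=> g [H|[H|H]]; [by left|by right|by case: H].
  move=> g [H|[H|H]]; [by left; left|by left; right|by case: H => ->; right].
have transfer (f g : sent) : PRef (fun h => h = f) (fun h => h = g) -> Ga f -> Ga g.
  move=> H Hf; case: (tot g) => // Hg; exfalso.
  by apply: (no_ref _ _ _ _ H) => h ->.
pose h := fun n (r : S n) (x : 'I_n -> term) => Ga (Sent r x).
have PE (P Q : Prop) : (P -> Q) -> (Q -> P) -> P = Q.
  by move=> H1 H2; apply: propositional_extensionality; split.
exists term, h; split; last first.
  move=> n r s Hrs; apply: NNPP => Hne.
  have key (r' s' : S n) : ~ ple r' s' -> h n r' = h n s' -> False.
    move=> Hn E; pose p := @Base L n r' s'.
    have G1 : Ga (Sent r' (@iota L p)) by left; exists p.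
    have D1 : Da (Sent s' (@iota L p)) by left; exists p.
    have : h n r' (@iota L p) by [].
    rewrite E => G2; exact: excl G2 D1.
  case: (classic (ple r s)) => [Hle|Hnle]; last exact: key Hnle Hrs.
  apply: (key s r) (esym Hrs) => H; apply: Hne; exact: (le_anti HL Hle H).
split.
  move=> n k a r; apply: functional_extensionality => x /=; rewrite /h.
  have Ea : finfun (fun i => a i) = a by apply/ffunP => i; rewrite ffunE.
  apply: PE; apply: transfer.
    apply: (@PRef11 k x (Plc (psubst a r) (fun i => i)) (Plc r (fun i => a i))) => //.
    by rewrite pv_id /pv /= Ea; exact: (le_refl HL).
  apply: (@PRef11 k x (Plc r (fun i => a i)) (Plc (psubst a r) (fun i => i))) => //.
  by rewrite pv_id /pv /= Ea; exact: (le_refl HL).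
split.
  move=> n; apply: functional_extensionality => x /=; rewrite /h.
  apply: PE => // H; apply: (no_ref _ _ _ _ (@PRef10 n x (Plc (pzero L n) (fun i => i)) _ erefl _)).
  - by move=> f ->.
  - by [].
  by rewrite pv_id; exact: (le_refl HL).
split.
  move=> n; apply: functional_extensionality => x /=; rewrite /h.
  apply: PE => // _; case: (tot (Sent (pone L n) x)) => // HD; exfalso.
  apply: (no_ref _ _ _ _ (@PRef01 n x (Plc (pone L n) (fun i => i)) _ erefl _)).
  - by [].
  - by move=> f ->.
  by rewrite pv_id; exact: (le_refl HL).
split.
  move=> n r s; apply: functional_extensionality => x /=; rewrite /h.
  apply: PE.
    move=> H; apply: NNPP => Hn.
    have Hr : Da (Sent r x) by case: (tot (Sent r x)) => // ?; case: Hn; left.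
    have Hs : Da (Sent s x) by case: (tot (Sent s x)) => // ?; case: Hn; right.
    apply: (no_ref _ _ _ _ (@PRef12 n x (Plc (pjoin r s) (fun i => i)) (Plc r (fun i => i))
                               (Plc s (fun i => i)) _ _ _ erefl erefl erefl _)).
    - by move=> f ->.
    - by move=> f [->|->].
    rewrite !pv_id; exact: (le_refl HL).
  case=> H; apply: transfer H.
    apply: (@PRef11 n x (Plc r (fun i => i)) (Plc (pjoin r s) (fun i => i))) => //.
    by rewrite !pv_id; exact: (join_l HL).
  apply: (@PRef11 n x (Plc s (fun i => i)) (Plc (pjoin r s) (fun i => i))) => //.
  by rewrite !pv_id; exact: (join_r HL).
split.
  move=> n r s; apply: functional_extensionality => x /=; rewrite /h.
  apply: PE.
    move=> H; split; apply: transfer H.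
      apply: (@PRef11 n x (Plc (pmeet r s) (fun i => i)) (Plc r (fun i => i))) => //.
      by rewrite !pv_id; exact: (meet_l HL).
    apply: (@PRef11 n x (Plc (pmeet r s) (fun i => i)) (Plc s (fun i => i))) => //.
    by rewrite !pv_id; exact: (meet_r HL).
  case=> Hr Hs; case: (tot (Sent (pmeet r s) x)) => // HD; exfalso.
  apply: (no_ref _ _ _ _ (@PRef21 n x (Plc r (fun i => i)) (Plc s (fun i => i))
                             (Plc (pmeet r s) (fun i => i)) _ _ _ erefl erefl erefl _)).
  - by move=> f [->|->].
  - by move=> f ->.
  rewrite !pv_id; exact: (le_refl HL).
move=> n r; apply: functional_extensionality => x /=; rewrite /h.
apply: PE.
  move=> H; exists (wit (Inst r x)).
  case: (tot (concl (Inst r x))) => // HD; exfalso.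
  apply: PA; exists [:: Inst r x] => b.
  case Eb: (b (Inst r x)).
    apply: PRef_mono (self_ref (concl (Inst r x))) => g ->.
      by right; exists (Inst r x); split; [left|].
    by left.
  apply: PRef_mono (self_ref (prem (Inst r x))) => g ->.
    by left.
  by right; exists (Inst r x); split; [left|rewrite Eb].
case=> y Hy; apply: transfer Hy.
apply: (@PRef11 n.+1 (snoc x y) (Plc r (fun i => i)) (Plc (pex r) (fun i => cyl n i))) => //.
  rewrite /psent /=; congr Sent; apply: functional_extensionality => i.
  by rewrite ffunE widen_lift snoc_lift.
rewrite pv_id /pv /=.
have -> : finfun (fun i => cyl n i) = cyl n by apply/ffunP => i; rewrite ffunE.
exact: (ax8 HL).
Qed.

End ModelND.

Section Degen.
Variable L : peAlg.
Hypothesis HL : pe_axioms L.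
Hypothesis Hd : ple (pone L 1) (pzero L 1).
Local Notation S := (psort L).
Local Notation "x <=L y" := (ple x y) (at level 70).

Lemma ne10 : ~ ple (pone L 0) (pzero L 0).
Proof.
move=> H; have := @ax0B L HL [::] (@Base L 0 (pone L 0) (pzero L 0)).
rewrite !big_ord0 => /(_ H) [[m Hm]] _; by [].
Qed.

Lemma zne1 : pzero L 0 = pone L 0 -> False.
Proof. by move=> E0; apply: ne10; rewrite -E0; exact: (le_refl HL). Qed.

Lemma two_val (r : S 0) : r = pone L 0 \/ r = pzero L 0.
Proof.
pose d := @Base L 0 (pone L 0) (pzero L 0).
have := @ax0B L HL [:: @Base L 0 (pone L 0) r; @Base L 0 r (pzero L 0)] d.
have Hid (a : {ffun 'I_0 -> 'I_0}) (x : S 0) : psubst a x = x.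
  rewrite -{2}(subI HL x); congr psubst; by apply/ffunP => -[m Hm].
rewrite (@big_ord_recl _ _ _ 1) (@big_ord_recl _ _ _ 0) (@big_ord_recl _ _ _ 1) (@big_ord_recl _ _ _ 0) !big_ord0 /= !Hid => H.
case: H => [|i].
  change (pmeet (pone L 0) (pmeet r (pone L 0)) <=L pjoin r (pjoin (pzero L 0) (pzero L 0))).
  rewrite (m1 HL) (mC HL) (m1 HL) (j0 HL) (j0 HL); exact: (le_refl HL).
case: i => [[|[|//]] Hi] /= H.
  by left; exact: (le_anti HL (le1 HL r) H).
by right; exact: (le_anti HL H (le0 HL r)).
Qed.

Lemma triv n (x : S n.+1) : x = pzero L n.+1.
Proof.
have E1 : pone L n.+1 = pzero L n.+1.
  pose a : {ffun 'I_1 -> 'I_n.+1} := [ffun => ord0].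
  by rewrite -(sub1 HL a) -(sub0 HL a) (le_anti HL Hd (le0 HL _)).
by apply: (le_anti HL); [rewrite -E1; exact: (le1 HL)|exact: (le0 HL)].
Qed.

Lemma ex_zero (r : S 1) : pex r = pzero L 0.
Proof.
by rewrite (triv r) (ex0 HL).
Qed.

Lemma embeds_deg : embeds_in_A L.
Proof.
pose h := fun n (r : S n) (x : 'I_n -> False) => r = pone L n.
have PE (P Q : Prop) : (P -> Q) -> (Q -> P) -> P = Q.
  by move=> H1 H2; apply: propositional_extensionality; split.
have e0 : 'I_0 -> False by case.
have n0 n (x : 'I_n -> False) : n = 0 by case: n x => // n x; case: (x ord0).
exists False, h; split; last first.
  move=> [|n] r s E.
    have := f_equal (fun f => f e0) E; rewrite /h => E'.
    have F : pzero L 0 = pone L 0 -> False.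
      by move=> E0; apply: ne10; rewrite -E0; exact: (le_refl HL).
    case: (two_val r) => Hr; case: (two_val s) => Hs; rewrite Hr Hs in E' *; rewrite //; exfalso; apply: F.
      exact: (eq_rect _ (fun P : Prop => P) erefl _ E').
    exact: (eq_rect _ (fun P : Prop => P) erefl _ (esym E')).
  by rewrite (triv r) (triv s).
split.
  move=> n k a r; apply: functional_extensionality => x /=; rewrite /h.
  have Ek := n0 _ x; subst k.
  case: n a r => [|n] a r; last by case: (a ord0) => ? [].
  have -> : a = [ffun i => i] by apply/ffunP => -[].
  by rewrite (subI HL).
split.
  move=> n; apply: functional_extensionality => x /=; rewrite /h.
  have En := n0 _ x; subst n; apply: PE => // E.
  by apply: ne10; rewrite -E; exact: (le_refl HL).
split.
  by move=> n; apply: functional_extensionality => x /=; rewrite /h; apply: PE.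
split.
  move=> n r s; apply: functional_extensionality => x /=; rewrite /h.
  have En := n0 _ x; subst n.
  case: (two_val r) => ->; case: (two_val s) => ->.
  - by rewrite (jj HL); apply: PE => // _; left.
  - by rewrite (j0 HL); apply: PE => // _; left.
  - by rewrite (jC HL) (j0 HL); apply: PE => // _; right.
  - by rewrite (jj HL); apply: PE => [E|[E|E]]; case: zne1.
split.
  move=> n r s; apply: functional_extensionality => x /=; rewrite /h.
  have En := n0 _ x; subst n.
  case: (two_val r) => ->; case: (two_val s) => ->.
  - by rewrite (mm HL); apply: PE.
  - by rewrite (mC HL) (m1 HL); apply: PE => [E|[_ E]]; case: zne1.
  - by rewrite (m1 HL); apply: PE => [E|[E _]]; case: zne1.
  - by rewrite (mm HL); apply: PE => [E|[E _]]; case: zne1.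
move=> n r; apply: functional_extensionality => x /=; rewrite /h.
have En := n0 _ x; subst n.
apply: PE; last by case.
by rewrite ex_zero => E; case: ne10; rewrite -E; exact: (le_refl HL).
Qed.

End Degen.

Section AW.
Variable W : Type.
Local Notation AW := (A W).

Lemma PE (P Q : Prop) : (P -> Q) -> (Q -> P) -> P = Q.
Proof. by move=> H1 H2; apply: propositional_extensionality; split. Qed.

Lemma bigmeetA_seq k (I : Type) (s : seq I) (F : I -> psort AW k) x :
  (\big[@pmeet AW k/pone AW k]_(i <- s) F i) x <-> forall i, List.In i s -> F i x.
Proof.
elim: s => [|j s IH]; first by rewrite big_nil.
rewrite big_cons /=; split.
  by case=> H1 /IH H2 i [<-|Hi] //; apply: H2.
by move=> H; split; [apply: H; left|apply/IH => i Hi; apply: H; right].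
Qed.
Lemma bigjoinA_seq k (I : Type) (s : seq I) (F : I -> psort AW k) x :
  (\big[@pjoin AW k/pzero AW k]_(i <- s) F i) x <-> exists i, List.In i s /\ F i x.
Proof.
elim: s => [|j s IH]; first by rewrite big_nil /=; split=> // [[i [[] _]]].
rewrite big_cons /=; split.
  case=> [H|/IH [i [Hi H]]]; first by exists j; split=> //; left.
  by exists i; split=> //; right.
case=> i [[<-|Hi] H]; [by left|right; apply/IH; by exists i].
Qed.
Lemma In_enum_ord N (i : 'I_N) : List.In i (index_enum 'I_N).
Proof.
have : i \in index_enum 'I_N by rewrite mem_index_enum.
elim: (index_enum _) => [//|j s IH]; rewrite inE => /orP [/eqP ->|H]; [by left|right; exact: IH].
Qed.
Lemma bigmeetA k N (F : 'I_N -> psort AW k) x :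
  (\big[@pmeet AW k/pone AW k]_(i < N) F i) x <-> forall i, F i x.
Proof.
rewrite bigmeetA_seq; split=> H i; [apply: H; exact: In_enum_ord|by move=> _; apply: H].
Qed.
Lemma bigjoinA k N (F : 'I_N -> psort AW k) x :
  (\big[@pjoin AW k/pzero AW k]_(i < N) F i) x <-> exists i, F i x.
Proof.
rewrite bigjoinA_seq; split; first by case=> i [_ H]; exists i.
by case=> i H; exists i; split=> //; exact: In_enum_ord.
Qed.

Lemma cast_lshift_lift n m (j : 'I_m) :
  cast_ord (addnC m n.+1) (lshift n.+1 j) = lift ord_max (cast_ord (addnC m n) (lshift n j)).
Proof.
apply: val_inj; rewrite /= /bump leqNgt.
by have := ltn_ord j; rewrite (_ : (j < n + m) = true) //; apply: leq_trans (leq_addl _ _).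
Qed.

Lemma pexnA n m (P : psort AW (n + m)) (x : 'I_m -> W) :
  @pexn AW n m P x <-> exists z : 'I_(n + m) -> W,
     (forall j, z (cast_ord (addnC m n) (lshift n j)) = x j) /\ P z.
Proof.
elim: n P => [|n IH] P /=.
  split; first by move=> H; exists x; split=> // j; congr x; apply: val_inj.
  case=> z [Hz HP]; have -> : x = z.
    by apply: functional_extensionality => j; rewrite -Hz; congr z; apply: val_inj.
  exact: HP.
rewrite IH; split.
  case=> z [Hz [y Hy]]; exists (snoc z y); split=> // j.
  by rewrite cast_lshift_lift snoc_lift.
case=> z [Hz HP]; exists (fun k => z (lift ord_max k)); split.
  by move=> j; rewrite -cast_lshift_lift.
exists (z ord_max); have -> : snoc (fun k => z (lift ord_max k)) (z ord_max) = z.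
  apply: functional_extensionality => k; case: (unliftP ord_max k) => [k' ->|->].
    by rewrite snoc_lift.
  by rewrite snoc_max.
exact: HP.
Qed.

End AW.

Lemma widen_lift' n (i : 'I_n) : widen_ord (leqnSn n) i = lift ord_max i.
Proof. by apply: val_inj; rewrite /= /bump leqNgt ltn_ord. Qed.

Lemma sumn_take_S (ks : seq nat) i : i < size ks ->
  sumn (take i.+1 ks) = sumn (take i ks) + nth 0 ks i.
Proof. by move=> Hi; rewrite (take_nth 0 Hi) sumn_rcons. Qed.

Lemma sumn_take_mono (ks : seq nat) a b : a <= b -> sumn (take a ks) <= sumn (take b ks).
Proof.
move=> Hab; rewrite -(subnKC Hab) takeD sumn_cat; exact: leq_addr.
Qed.

Lemma decomp (ks : seq nat) p : p < sumn ks ->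
  exists i l, i < size ks /\ l < nth 0 ks i /\ p = l + sumn (take i ks).
Proof.
elim: ks p => [|k ks IH] p //= Hp.
case: (ltnP p k) => Hpk.
  by exists 0, p; rewrite /= addn0.
have Hp' : p - k < sumn ks by rewrite ltn_subLR.
case: (IH _ Hp') => i [l [H1 [H2 H3]]].
exists i.+1, l; split=> //; split=> //=.
by rewrite addnCA -H3 subnKC.
Qed.

Lemma decomp_uniq (ks : seq nat) i i' l l' : i < size ks -> i' < size ks ->
  l < nth 0 ks i -> l' < nth 0 ks i' ->
  l + sumn (take i ks) = l' + sumn (take i' ks) -> i = i'.
Proof.
have side : forall i i' l l', i < size ks -> l < nth 0 ks i -> i < i' ->
    l + sumn (take i ks) < l' + sumn (take i' ks).
  move=> a a' b b' Ha Hb Haa.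
  apply: leq_trans (leq_addl _ _); apply: leq_trans (sumn_take_mono ks Haa).
  by rewrite sumn_take_S // addnC ltn_add2l.
move=> Hi Hi' Hl Hl' E; case: (ltngtP i i') => // H.
  by have := side _ _ _ l' Hi Hl H; rewrite E ltnn.
by have := side _ _ _ l Hi' Hl' H; rewrite E ltnn.
Qed.

Section Conv.
Variable L : peAlg.
Variable W : Type.
Unset Implicit Arguments.
Variable h : forall n, psort L n -> psort (A W) n.
Hypothesis Hh : pe_hom h.
Hypothesis Hinj : forall n, injective (h n).
Local Notation AW := (A W).

Lemma hS n k (a : {ffun 'I_n -> 'I_k}) r : h k (psubst a r) = psubst a (h n r).
Proof. by case: Hh => H _; apply: H. Qed.
Lemma h0 n : h n (pzero L n) = pzero AW n. Proof. by case: Hh => _ [H _]. Qed.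
Lemma h1 n : h n (pone L n) = pone AW n. Proof. by case: Hh => _ [_ [H _]]. Qed.
Lemma hJ n r s : h n (pjoin r s) = pjoin (h n r) (h n s). Proof. by case: Hh => _ [_ [_ [H _]]]. Qed.
Lemma hM n r s : h n (pmeet r s) = pmeet (h n r) (h n s). Proof. by case: Hh => _ [_ [_ [_ [H _]]]]. Qed.
Lemma hE n r : h n (pex r) = pex (h n.+1 r). Proof. by case: Hh => _ [_ [_ [_ [_ H]]]]. Qed.

Lemma hle n (x y : psort L n) : ple x y <-> (forall t, h n x t -> h n y t).
Proof.
rewrite /ple; split.
  by move=> E t; rewrite E hM /=; case.
move=> H; apply: Hinj; rewrite hM; apply: functional_extensionality => t /=.
by apply: PE => [Hx|[]//]; split=> //; apply: H.
Qed.

Lemma h_pexn n m z : h m (@pexn L n m z) = @pexn AW n m (h (n + m) z).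
Proof. elim: n z => [|n IH] z //=; by rewrite IH hE. Qed.

Lemma h_bigmeet k N (F : 'I_N -> psort L k) :
  h k (\big[@pmeet L k/pone L k]_(i < N) F i) = \big[@pmeet AW k/pone AW k]_(i < N) h k (F i).
Proof. apply: (big_morph (h k)); [exact: hM|exact: h1]. Qed.
Lemma h_bigjoin k N (F : 'I_N -> psort L k) :
  h k (\big[@pjoin L k/pzero L k]_(i < N) F i) = \big[@pjoin AW k/pzero AW k]_(i < N) h k (F i).
Proof. apply: (big_morph (h k)); [exact: hJ|exact: h0]. Qed.

Lemma conv : pe_axioms L.
Proof.
split.
  move=> ks r s /hle; rewrite h_bigmeet h_bigjoin => H.
  apply: NNPP => Hno.
  have Hx i : exists x, h _ (r i) x /\ ~ h _ (s i) x.
    apply: NNPP => Hn; apply: Hno; exists i; apply/hle => t Ht.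
    apply: NNPP => Hs; apply: Hn; by exists t.
  pose xs i := proj1_sig (constructive_indefinite_description _ (Hx i)).
  have xsP i : h _ (r i) (xs i) /\ ~ h _ (s i) (xs i).
    exact: (proj2_sig (constructive_indefinite_description _ (Hx i))).
  have Hdec (p : 'I_(sumn ks)) : exists s0 : {i : 'I_(size ks) & 'I_(nth 0 ks i)},
      val (pcyl (projT1 s0) (projT2 s0)) = val p.
    case: (decomp (ltn_ord p)) => i [l [Hi [Hl E]]].
    by exists (existT _ (Ordinal Hi) (Ordinal Hl)); rewrite ffunE /= E.
  pose t (p : 'I_(sumn ks)) := let s0 := proj1_sig (constructive_indefinite_description _ (Hdec p)) in
     xs (projT1 s0) (projT2 s0).
  have key i l : t (pcyl i l) = xs i l.
    rewrite /t; case: (constructive_indefinite_description _ _) => [[i' l'] /= Hs].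
    rewrite !ffunE /= in Hs.
    have Ei : i' = i.
      apply: val_inj; apply: (decomp_uniq (ltn_ord i') (ltn_ord i) (ltn_ord l') (ltn_ord l) Hs).
    subst i'; have -> // : l' = l by apply: val_inj; move: Hs => /eqP; rewrite eqn_add2r => /eqP.
  have Et i : (fun l => t (pcyl i l)) = xs i by apply: functional_extensionality => l; exact: key.
  have : (\big[@pjoin AW _/pzero AW _]_(i < size ks) h _ (psubst (pcyl i) (s i))) t.
    apply: H; apply/bigmeetA => i; rewrite hS /= Et; exact: (proj1 (xsP i)).
  move/bigjoinA => [i]; rewrite hS /= Et; exact: (proj2 (xsP i)).
split.
  move=> n x y z; do ![split|]; apply: Hinj;
    rewrite ?hJ ?hM ?h0 ?h1 ?hJ ?hM; apply: functional_extensionality => t /=;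
    apply: PE; tauto.
split.
  by move=> n k a x y; split; apply: Hinj; rewrite ?hS ?h0 ?h1 ?hJ ?hM ?hS.
split.
  move=> n k m a b r; apply: Hinj; rewrite !hS; apply: functional_extensionality => t /=.
  by congr (h n r); apply: functional_extensionality => i; rewrite ffunE.
split.
  move=> n r; apply: Hinj; rewrite !hS; apply: functional_extensionality => t /=.
  by congr (h n r); apply: functional_extensionality => i; rewrite ffunE.
split.
  move=> n r s; split; apply: Hinj; rewrite ?hE ?h0 ?hJ ?hE;
    apply: functional_extensionality => t /=; apply: PE.
  - by case.
  - by [].
  - by case=> y [H|H]; [left|right]; exists y.
  - by case=> [[y H]|[y H]]; exists y; [left|right].
have cylE n (t : 'I_n -> W) y : (fun i => snoc t y (cyl n i)) = t.
  by apply: functional_extensionality => i; rewrite ffunE widen_lift' snoc_lift.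
split.
  move=> n r; apply/hle => t Ht; rewrite hS /= hE /=.
  exists (t ord_max); have -> : snoc (fun i => t (cyl n i)) (t ord_max) = t.
    apply: functional_extensionality => k; case: (unliftP ord_max k) => [k' ->|->].
      by rewrite snoc_lift ffunE widen_lift'.
    by rewrite snoc_max.
  exact: Ht.
split.
  move=> n r s; apply: Hinj; rewrite hE hM hS hM hE.
  apply: functional_extensionality => t /=; apply: PE.
    by case=> y []; rewrite cylE => H1 H2; split=> //; exists y.
  by case=> [[y H1] H2]; exists y; rewrite cylE.
move=> n m k a r; apply: Hinj; rewrite h_pexn h_bigmeet h_bigmeet.
have Eb (z : 'I_(n + m) -> W) (i : 'I_n) :
    (fun j => z (beta_of (a i) i j)) = snoc (fun j => z (cast_ord (addnC m n) (lshift n (a i j)))) (z (cast_ord (addnC m n) (rshift m i))).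
  apply: functional_extensionality => j; rewrite ffunE.
  case: (unliftP ord_max j) => [j' ->|->]; first by rewrite ?liftK snoc_lift.
  by rewrite ?unlift_none snoc_max.
apply: functional_extensionality => x; apply: PE.
  move/pexnA => [z [Hz /bigmeetA HP]]; apply/bigmeetA => i.
  rewrite hS hE /=; exists (z (cast_ord (addnC m n) (rshift m i))).
  have := HP i; rewrite hS /= Eb.
  by have -> : (fun j => z (cast_ord (addnC m n) (lshift n (a i j)))) = (fun j => x (a i j))
    by apply: functional_extensionality => j; rewrite Hz.
move/bigmeetA => H.
have Hy i : exists y, h _ (r i) (snoc (fun j => x (a i j)) y).
  by have := H i; rewrite hS hE.
pose ys i := proj1_sig (constructive_indefinite_description _ (Hy i)).
pose z := fun k : 'I_(n + m) => catf x ys (cast_ord (addnC n m) k).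
have zl j : z (cast_ord (addnC m n) (lshift n j)) = x j.
  rewrite /z (_ : cast_ord _ _ = lshift n j) ?catf_l //; exact: val_inj.
have zr i : z (cast_ord (addnC m n) (rshift m i)) = ys i.
  rewrite /z (_ : cast_ord _ _ = rshift m i) ?catf_r //; exact: val_inj.
apply/pexnA; exists z; split=> //; apply/bigmeetA => i.
rewrite hS /= Eb zr.
have -> : (fun j => z (cast_ord (addnC m n) (lshift n (a i j)))) = (fun j => x (a i j))
  by apply: functional_extensionality => j; rewrite zl.
exact: (proj2_sig (constructive_indefinite_description _ (Hy i))).
Qed.

End Conv.

Theorem theorem4p4 (L : peAlg) : pe_axioms L <-> embeds_in_A L.
Proof.
split.
  move=> HL; case: (classic (ple (pone L 1) (pzero L 1))) => H.
    exact: (embeds_deg HL H).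
  exact: (embeds_nd HL H).
case=> W [h [Hh Hinj]]; exact: (@conv L W h Hh Hinj).
Qed.
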